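(* Let $\mathbb{K}$ be an algebraically closed field, let $A$ be a $\mathbb{K}$-algebra which is an integral domain, and let $\delta$ be a non-negative subdegree on $A$ with minimal presentation $\delta=\max_{1\le i\le N}\delta_i$. Let $X:=\operatorname{Spec}A$, viewed as an open subset of $\bar X^\delta:=\operatorname{Proj}A^\delta$. Then the number of irreducible components of $X_\infty:=\bar X^\delta\setminus X$ is $N$ if none of the $\delta_i$ is the zero function, and $N-1$ otherwise.
   Context: A degree-like function on a $\mathbb{K}$-algebra $A$ is a map $\delta: A\setminus\{0\}\to\mathbb{Z}\cup\{-\infty\}$ such that $\delta(c)=0$ for nonzero constants $c\in\mathbb{K}$; $\delta(f+g)\le\max\{\delta(f),\delta(g)\}$, with strict inequality implying $\delta(f)=\delta(g)$; and $\delta(fg)\le\delta(f)+\delta(g)$. It is a semidegree if $\delta(fg)=\delta(f)+\delta(g)$, and a subdegree if it is the pointwise maximum of semidegrees $\delta_1,\dots,\delta_N$; the presentation is minimal if for each $i$ there is $f$ with $\delta_i(f)>\delta_j(f)$ for all $j\neq i$. With $F_d:=\{f\in A:\delta(f)\le d\}$, $A^\delta:=\bigoplus_{d\ge0}F_d\cong\sum_{d\ge0}F_dt^d$, with $(f)_d$ the copy of $f$ in degree $d$. The open embedding $X=\operatorname{Spec}A\hookrightarrow\operatorname{Proj}A^\delta$ is $\mathfrak p\mapsto\bigoplus_{d\ge0}(\mathfrak p\cap F_d)$, whose image is the complement of $V((1)_1)$. *)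

(* Defs.v *)
From HB Require Import structures.
From mathcomp Require Import all_boot all_order all_algebra.
Set Implicit Arguments. Unset Strict Implicit. Unset Printing Implicit Defensive.
Import Order.TTheory GRing.Theory Num.Theory.
Local Open Scope ring_scope.

(* Z ∪ {-oo}: [None] is -oo, [Some n] is the integer n. *)
Definition Zinf := option int.
Definition Zle (a b : Zinf) : bool :=
  match a, b with
  | None, _ => true
  | Some _, None => false
  | Some x, Some y => (x <= y)%R
  end.
Definition Zlt (a b : Zinf) : bool := Zle a b && (a != b).
Definition Zmax (a b : Zinf) : Zinf := if Zle a b then b else a.
Definition Zadd (a b : Zinf) : Zinf :=
  match a, b with Some x, Some y => Some (x + y)%R | _, _ => None end.

Section DegreeLike.
Variables (K : fieldType) (A : comAlgType K).

(* Only the values on A \ {0} are meaningful. *)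
Definition degree_like (d : A -> Zinf) : Prop :=
  [/\ (forall c : K, c != 0 -> d (c%:A) = Some 0%R),
      (forall f g : A, f != 0 -> g != 0 -> f + g != 0 ->
         Zle (d (f + g)) (Zmax (d f) (d g)) /\
         (Zlt (d (f + g)) (Zmax (d f) (d g)) -> d f = d g)) &
      (forall f g : A, f != 0 -> g != 0 -> f * g != 0 ->
         Zle (d (f * g)) (Zadd (d f) (d g)))].

Definition semidegree (d : A -> Zinf) : Prop :=
  degree_like d /\
  (forall f g : A, f != 0 -> g != 0 -> f * g != 0 -> d (f * g) = Zadd (d f) (d g)).

Definition subdegree_presentation (d : A -> Zinf) (N : nat) (ds : 'I_N -> A -> Zinf) : Prop :=
  (forall i, semidegree (ds i)) /\
  (forall f : A, f != 0 -> d f = \big[Zmax/None]_(i < N) ds i f).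

Definition minimal_presentation (N : nat) (ds : 'I_N -> A -> Zinf) : Prop :=
  forall i, exists f : A, f != 0 /\ forall j, j != i -> Zlt (ds j f) (ds i f).

Definition nonneg_fun (d : A -> Zinf) : Prop := forall f : A, f != 0 -> Zle (Some 0%R) (d f).

Definition is_zero_fun (d : A -> Zinf) : Prop := forall f : A, f != 0 -> d f = Some 0%R.

Definition Fd (d : A -> Zinf) (n : nat) (f : A) : bool := (f == 0) || Zle (d f) (Some (n%:Z)).

(* A^delta = sum_n F_n t^n, realised inside A[t] = {poly A} *)
Definition in_Adelta (d : A -> Zinf) (p : {poly A}) : Prop := forall n, Fd d n p`_n.

(* points of Proj A^delta: homogeneous prime ideals of A^delta not containing
   the irrelevant ideal A^delta_+ *)
Definition is_Proj_point (d : A -> Zinf) (P : {poly A} -> Prop) : Prop :=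
  [/\ (forall p, P p -> in_Adelta d p),
      P 0,
      (forall p q, P p -> P q -> P (p + q)),
      (forall p q, P p -> in_Adelta d q -> P (q * p)) &
      ~ P 1] /\
  [/\ (forall p q, in_Adelta d p -> in_Adelta d q -> P (p * q) -> P p \/ P q),
      (forall p, P p -> forall n, P ((p`_n)%:P * 'X^n)) &
      (exists p, [/\ in_Adelta d p, p`_0 = 0 & ~ P p])].

Definition Proj_closed (d : A -> Zinf) (C : ({poly A} -> Prop) -> Prop) : Prop :=
  exists I : {poly A} -> Prop, (forall p, I p -> in_Adelta d p) /\
    forall P, C P <-> (is_Proj_point d P /\ forall p, I p -> P p).

(* X_oo = Proj A^delta \ X = V((1)_1), where (1)_1 = t = 'X *)
Definition X_infty (d : A -> Zinf) (P : {poly A} -> Prop) : Prop :=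
  is_Proj_point d P /\ P 'X.

Definition irreducible_in_Xinf (d : A -> Zinf) (Z : ({poly A} -> Prop) -> Prop) : Prop :=
  [/\ (forall P, Z P -> X_infty d P),
      (exists P, Z P) &
      (forall C1 C2, Proj_closed d C1 -> Proj_closed d C2 ->
         (forall P, Z P -> C1 P \/ C2 P) ->
         (forall P, Z P -> C1 P) \/ (forall P, Z P -> C2 P))].

Definition irreducible_component_Xinf (d : A -> Zinf) (Z : ({poly A} -> Prop) -> Prop) : Prop :=
  irreducible_in_Xinf d Z /\
  (forall Z', irreducible_in_Xinf d Z' -> (forall P, Z P -> Z' P) -> forall P, Z' P -> Z P).

Definition Xinf_has_n_components (d : A -> Zinf) (M : nat) : Prop :=
  exists Zs : 'I_M -> ({poly A} -> Prop) -> Prop,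
    [/\ (forall i, irreducible_component_Xinf d (Zs i)),
        (forall i j, (forall P, Zs i P <-> Zs j P) -> i = j) &
        (forall Z, irreducible_component_Xinf d Z -> exists i, forall P, Z P <-> Zs i P)].

End DegreeLike.

(* Main.v *)
Require Import Defs.
From HB Require Import structures.
From mathcomp Require Import all_boot all_order all_algebra zify.
From Stdlib Require Import Classical IndefiniteDescription.
Import GRing.Theory Num.Theory.
Local Open Scope ring_scope.

Module Aux.
Set Implicit Arguments. Unset Strict Implicit.

Lemma Zle_refl a : Zle a a.
Proof. by case: a => [a|] //=; lia. Qed.
Lemma Zle_trans a b c : Zle a b -> Zle b c -> Zle a c.
Proof. case: a => [a|]; case: b => [b|]; case: c => [c|] //=; lia. Qed.
Lemma Zle_total a b : Zle a b || Zle b a.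
Proof. case: a => [a|]; case: b => [b|] //=; lia. Qed.
Lemma Zle_anti a b : Zle a b -> Zle b a -> a = b.
Proof. case: a => [a|]; case: b => [b|] //= h1 h2; congr Some; lia. Qed.
Lemma ZltE a b : Zlt a b = ~~ Zle b a.
Proof.
rewrite /Zlt; case: a => [a|]; case: b => [b|] //=.
rewrite (inj_eq (@Some_inj _)) /=. apply/idP/idP.
  by case/andP => h1 h2; apply/negP => h3; move/negP: h2; apply; apply/eqP; lia.
by move=> h; apply/andP; split; [lia| apply/eqP; lia].
Qed.
Lemma Zlt_le a b : Zlt a b -> Zle a b.
Proof. by case/andP. Qed.
Lemma Zle_lt_trans a b c : Zle a b -> Zlt b c -> Zlt a c.
Proof. rewrite !ZltE => h1 /negP h2; apply/negP => h3; apply: h2; exact: Zle_trans h3 h1. Qed.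
Lemma Zlt_le_trans a b c : Zlt a b -> Zle b c -> Zlt a c.
Proof. rewrite !ZltE => /negP h1 h2; apply/negP => h3; apply: h1; exact: Zle_trans h2 h3. Qed.
Lemma Zmax_le a b c : Zle (Zmax a b) c = Zle a c && Zle b c.
Proof. rewrite /Zmax; case: ifP => h; case: a h => [a|]; case: b => [b|]; case: c => [c|] //= h;
  apply/idP/idP; try (case/andP=> ? ?); try (move=> ?; apply/andP; split); lia. Qed.
Lemma Zle_maxl a b : Zle a (Zmax a b).
Proof. rewrite /Zmax; case: ifP => // _; exact: Zle_refl. Qed.
Lemma Zle_maxr a b : Zle b (Zmax a b).
Proof. rewrite /Zmax; case: ifP => [_|]; first exact: Zle_refl.
by move/negbT; have := Zle_total a b; case: (Zle a b). Qed.
Lemma Zmax_lt a b c : Zlt (Zmax a b) c = Zlt a c && Zlt b c.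
Proof. rewrite /Zmax; case: ifP => h.
  apply/idP/idP; first by move=> h2; rewrite h2 (Zle_lt_trans h h2).
  by case/andP.
apply/idP/idP; last by case/andP.
move=> h2; rewrite h2 /=; apply: Zle_lt_trans h2.
by move/negbT: h; have := Zle_total a b; case: (Zle a b).
Qed.
Lemma Zadd_le a a' b b' : Zle a a' -> Zle b b' -> Zle (Zadd a b) (Zadd a' b').
Proof. case: a => [a|]; case: b => [b|]; case: a' => [a'|]; case: b' => [b'|] //=; lia. Qed.
Lemma Zadd_lt_l a b x y : Zlt a (Some x) -> Zle b (Some y) -> Zlt (Zadd a b) (Some (x + y)).
Proof. rewrite !ZltE; case: a => [a|]; case: b => [b|] //=; lia. Qed.
Lemma Zadd_lt_r a b x y : Zle a (Some x) -> Zlt b (Some y) -> Zlt (Zadd a b) (Some (x + y)).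
Proof. rewrite !ZltE; case: a => [a|]; case: b => [b|] //=; lia. Qed.
Lemma Zadd0l a : Zadd (Some 0) a = a.
Proof. by case: a => [a|] //=; rewrite add0r. Qed.
Lemma Zadd0r a : Zadd a (Some 0) = a.
Proof. by case: a => [a|] //=; rewrite addr0. Qed.
Lemma Zlt_None a : Zlt None a = (a != None).
Proof. by case: a. Qed.

Section Gen.
Variables (K : fieldType) (A : comAlgType K).
Hypothesis A_idom : forall f g : A, f * g = 0 -> (f == 0) || (g == 0).

Definition Tot (d : A -> Zinf) (f : A) := if f == 0 then None else d f.

Lemma mulA_neq0 (f g : A) : f != 0 -> g != 0 -> f * g != 0.
Proof. move=> hf hg; apply/eqP => /A_idom; by rewrite (negbTE hf) (negbTE hg). Qed.

Lemma scal1_neq0 (c : K) : c != 0 -> c%:A != 0 :> A.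
Proof. by move=> hc; rewrite scaler_eq0 negb_or hc oner_neq0. Qed.

Variable d : A -> Zinf.
Hypothesis Hd : degree_like d.

Lemma Tot0 : Tot d 0 = None. Proof. by rewrite /Tot eqxx. Qed.
Lemma TotE f : f != 0 -> Tot d f = d f. Proof. by rewrite /Tot => /negbTE ->. Qed.

Lemma Tot_const c : c != 0 -> Tot d c%:A = Some 0.
Proof. move=> hc; rewrite TotE ?scal1_neq0 //; by case: Hd => h _ _; apply: h. Qed.

Lemma Tot_mul_le f g : Zle (Tot d (f * g)) (Zadd (Tot d f) (Tot d g)).
Proof.
have [->|hf] := eqVneq f 0; first by rewrite mul0r Tot0.
have [->|hg] := eqVneq g 0; first by rewrite mulr0 Tot0.
have hfg := mulA_neq0 hf hg.
rewrite !TotE //; by case: Hd => _ _ h; apply: h.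
Qed.

Lemma Tot_opp f : Tot d (- f) = Tot d f.
Proof.
have m1 : (-1 : K) != 0 by rewrite oppr_eq0 oner_neq0.
have key : forall g, Zle (Tot d (- g)) (Tot d g).
  move=> g; have -> : - g = (-1 : K)%:A * g by rewrite scaleN1r mulN1r.
  by have := Tot_mul_le ((-1 : K)%:A) g; rewrite Tot_const // Zadd0l.
apply: Zle_anti; first exact: key.
by have := key (- f); rewrite opprK.
Qed.

Lemma Tot_add_le f g : Zle (Tot d (f + g)) (Zmax (Tot d f) (Tot d g)).
Proof.
have [->|hf] := eqVneq f 0; first by rewrite add0r Tot0 Zle_maxr.
have [->|hg] := eqVneq g 0; first by rewrite addr0 Tot0 Zle_maxl.
have [->|hfg] := eqVneq (f + g) 0; first by rewrite Tot0.
rewrite !TotE //; case: Hd => _ h _; by case: (h f g hf hg hfg).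
Qed.

Lemma Tot_add_lt f g : Zlt (Tot d f) (Tot d g) -> Tot d (f + g) = Tot d g.
Proof.
have [->|hf] := eqVneq f 0; first by rewrite add0r.
have [->|hg] := eqVneq g 0; first by rewrite Tot0 ZltE.
have [hfg|hfg] := eqVneq (f + g) 0.
  have -> : g = - f by apply/eqP; rewrite -addr_eq0 addrC hfg.
  by rewrite Tot_opp ZltE Zle_refl.
move=> hlt; rewrite !TotE // in hlt *.
case: Hd => _ h _; have [hle h2] := h f g hf hg hfg.
have hmax : Zmax (d f) (d g) = d g by rewrite /Zmax (Zlt_le hlt).
rewrite hmax in hle h2.
apply: Zle_anti => //.
case E: (Zle (d g) (d (f+g))) => //.
have /h2 eq : Zlt (d (f+g)) (d g) by rewrite ZltE E.
by rewrite eq ZltE Zle_refl in hlt.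
Qed.

Lemma Tot_sum_lt (I : Type) (r : seq I) (P : pred I) (F : I -> A) v :
  (forall i, P i -> Zlt (Tot d (F i)) (Some v)) ->
  Zlt (Tot d (\sum_(i <- r | P i) F i)) (Some v).
Proof.
move=> h; apply: (big_ind (fun x => Zlt (Tot d x) (Some v))) => //.
  by rewrite Tot0.
move=> x y hx hy; apply: Zle_lt_trans (Tot_add_le x y) _; by rewrite Zmax_lt hx hy.
Qed.

Lemma Tot_sum_le (I : Type) (r : seq I) (P : pred I) (F : I -> A) v :
  (forall i, P i -> Zle (Tot d (F i)) v) ->
  Zle (Tot d (\sum_(i <- r | P i) F i)) v.
Proof.
move=> h; apply: (big_ind (fun x => Zle (Tot d x) v)) => //.
  by rewrite Tot0.
move=> x y hx hy; apply: Zle_trans (Tot_add_le x y) _; by rewrite Zmax_le hx hy.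
Qed.

End Gen.

Section Semi.
Variables (K : fieldType) (A : comAlgType K).
Hypothesis A_idom : forall f g : A, f * g = 0 -> (f == 0) || (g == 0).
Variable d : A -> Zinf.
Hypothesis Hd : semidegree d.

Lemma Tot_mul f g : Tot d (f * g) = Zadd (Tot d f) (Tot d g).
Proof.
have [->|hf] := eqVneq f 0; first by rewrite mul0r Tot0.
have [->|hg] := eqVneq g 0; first by rewrite mulr0 !Tot0; case: (Tot d f).
have hfg := mulA_neq0 A_idom hf hg.
rewrite !TotE //; by case: Hd => _ h; apply: h.
Qed.
End Semi.

Lemma bigZmax_le (I : Type) (r : seq I) (F : I -> Zinf) v :
  Zle (\big[Zmax/None]_(i <- r) F i) v = all (fun i => Zle (F i) v) r.
Proof. elim: r => [|x r IH]; first by rewrite big_nil. by rewrite big_cons Zmax_le IH. Qed.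

Lemma bigZmax_lt (I : Type) (r : seq I) (F : I -> Zinf) v :
  Zlt (\big[Zmax/None]_(i <- r) F i) v = (v != None) && all (fun i => Zlt (F i) v) r.
Proof. elim: r => [|x r IH]; first by rewrite big_nil andbT Zlt_None.
by rewrite big_cons Zmax_lt IH andbCA. Qed.

Definition hc (A : nzRingType) (a : A) n : {poly A} := a%:P * 'X^n.

Lemma coef_hc (A : nzRingType) (a : A) n m : (hc a n)`_m = if m == n then a else 0.
Proof. by rewrite /hc coefCM coefXn; case: (m == n); rewrite ?mulr1 ?mulr0. Qed.

Lemma poly_hc_sum (A : nzRingType) (p : {poly A}) : p = \sum_(n < size p) hc p`_n n.
Proof. rewrite -[p in LHS]coefK poly_def; apply: eq_bigr => i _; by rewrite /hc mul_polyC. Qed.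

Section Main.
Variables (K : fieldType) (A : comAlgType K).
Hypothesis A_idom : forall f g : A, f * g = 0 -> (f == 0) || (g == 0).
Variables (delta : A -> Zinf) (N : nat) (ds : 'I_N -> A -> Zinf).
Hypotheses (Hdl : degree_like delta) (Hnn : nonneg_fun delta)
  (Hpres : subdegree_presentation delta ds) (Hmin : minimal_presentation ds).

Notation Dl := (Tot delta).
Notation D i := (Tot (ds i)).

Lemma Hsemi i : semidegree (ds i). Proof. by case: Hpres. Qed.
Lemma Hdli i : degree_like (ds i). Proof. by case: (Hsemi i). Qed.

Lemma Dl_big f : Dl f = \big[Zmax/None]_(i < N) D i f.
Proof.
have [->|hf] := eqVneq f 0.
  rewrite Tot0; symmetry; apply: (big_ind (fun x => x = None)) => // [x y -> ->|i _]; last exact: Tot0.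
  by rewrite /Zmax.
rewrite TotE //; case: Hpres => _ ->//; apply: eq_bigr => i _; by rewrite TotE.
Qed.

Lemma Dl_le f v : Zle (Dl f) v <-> forall i, Zle (D i f) v.
Proof.
rewrite Dl_big bigZmax_le; split.
  by move/allP => h i; apply: h; rewrite mem_index_enum.
by move=> h; apply/allP => i _; apply: h.
Qed.

Lemma Dl_lt f n : Zlt (Dl f) (Some n) <-> forall i, Zlt (D i f) (Some n).
Proof.
rewrite Dl_big bigZmax_lt /=; split.
  by move/allP => h i; apply: h; rewrite mem_index_enum.
by move=> h; apply/allP => i _; apply: h.
Qed.

Lemma D_le_Dl i f : Zle (D i f) (Dl f).
Proof. by move: (Zle_refl (Dl f)); rewrite Dl_le. Qed.

Lemma Dl_nn f : f != 0 -> Zle (Some 0) (Dl f).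
Proof. by move=> hf; rewrite TotE //; apply: Hnn. Qed.

Definition inAd (p : {poly A}) := forall n, Zle (Dl p`_n) (Some n%:Z).

Lemma inAdP p : in_Adelta delta p <-> inAd p.
Proof.
rewrite /in_Adelta /inAd /Fd /Tot; split => h n; move: (h n);
by case: (p`_n == 0).
Qed.

Lemma inAd_hc a n : Zle (Dl a) (Some n%:Z) -> inAd (hc a n).
Proof. move=> h m; rewrite coef_hc; case: eqP => [->//|_]; by rewrite Tot0. Qed.

Lemma Dl1 : Dl 1 = Some 0.
Proof. by have := Tot_const Hdl (oner_neq0 K); rewrite scale1r. Qed.
Lemma Di1 i : D i 1 = Some 0.
Proof. by have := Tot_const (Hdli i) (oner_neq0 K); rewrite scale1r. Qed.

Lemma inAd0 : inAd 0.
Proof. by move=> n; rewrite coef0 Tot0. Qed.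

Lemma inAd1 : inAd 1.
Proof. move=> n; rewrite coef1; case: n => [|n] /=; first by rewrite Dl1.
by rewrite Tot0. Qed.

Lemma inAdX : inAd 'X.
Proof. move=> n; rewrite coefX; case: eqP => [->|_]; first by rewrite Dl1.
by rewrite Tot0. Qed.

Lemma inAdD p q : inAd p -> inAd q -> inAd (p + q).
Proof.
move=> hp hq n; rewrite coefD; apply: Zle_trans (Tot_add_le Hdl _ _) _.
by rewrite Zmax_le hp hq.
Qed.

Lemma inAdM p q : inAd p -> inAd q -> inAd (p * q).
Proof.
move=> hp hq n; rewrite coefM; apply: (Tot_sum_le Hdl) => j _.
apply: Zle_trans (Tot_mul_le A_idom Hdl _ _) _.
have -> : (n%:Z) = (j%:Z + (n - j)%N%:Z) by rewrite -PoszD subnKC // -ltnS.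
have h := (Zadd_le (hp j) (hq (n - j)%N)). exact h.
Qed.

Lemma inAd_prod (I : Type) (r : seq I) (F : I -> {poly A}) :
  (forall i, inAd (F i)) -> inAd (\prod_(i <- r) F i).
Proof. move=> h; apply: big_ind => //; [exact: inAd1 | exact: inAdM]. Qed.


Lemma D_le_n i p n : inAd p -> Zle (D i p`_n) (Some n%:Z).
Proof. move=> h; exact: Zle_trans (D_le_Dl i _) (h n). Qed.

Definition pI i (p : {poly A}) : Prop :=
  in_Adelta delta p /\ forall n, Zlt (D i p`_n) (Some n%:Z).

Definition Zset i (P : {poly A} -> Prop) : Prop :=
  is_Proj_point delta P /\ forall p, pI i p -> P p.

Lemma maxidx i p : inAd p -> ~ pI i p ->
  exists n, D i p`_n = Some n%:Z /\ forall k, (n < k)%N -> Zlt (D i p`_k) (Some k%:Z).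
Proof.
move=> hp hn.
have [n hn'] : exists n, D i p`_n == Some n%:Z.
  apply: NNPP => hne; apply: hn; split; first by apply/inAdP.
  move=> n; rewrite /Zlt (D_le_n _ _ hp) /=; apply/negP => /eqP e.
  by apply: hne; exists n; rewrite e.
have ub : forall k, D i p`_k == Some k%:Z -> (k <= size p)%N.
  move=> k; case: (leqP (size p) k) => [hk|hk]; last by move=> _; exact: ltnW.
  by rewrite nth_default // Tot0.
case: (ex_maxnP (ex_intro _ n hn') ub) => m /eqP hm hmax.
exists m; split => // k hk; rewrite /Zlt (D_le_n _ _ hp) /=.
apply/negP => hkk; move: (hmax k hkk); by rewrite leqNgt hk.
Qed.

Lemma pI_prime i p q : inAd p -> inAd q -> pI i (p * q) -> pI i p \/ pI i q.
Proof.
move=> hp hq [_ hpq].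
case: (classic (pI i p)) => Hp; first by left.
case: (classic (pI i q)) => Hq; first by right.
exfalso.
have [n [hn nmax]] := maxidx hp Hp.
have [m [hm mmax]] := maxidx hq Hq.
move: (hpq (n + m)%N); rewrite coefM.
have hj0 : (n < (n + m).+1)%N by rewrite ltnS leq_addr.
rewrite (bigD1 (Ordinal hj0)) //= addrC (Tot_add_lt A_idom (Hdli i)).
  rewrite (Tot_mul A_idom (Hsemi i)) addKn hn hm /= PoszD.
  by rewrite ZltE Zle_refl.
rewrite (Tot_mul A_idom (Hsemi i)) addKn hn hm /= -PoszD.
apply: (Tot_sum_lt (Hdli i)) => j hj.
rewrite (Tot_mul A_idom (Hsemi i)).
have hjN : (j <= n + m)%N by rewrite -ltnS.
have -> : Posz (n + m)%N = Posz j + Posz (n + m - j)%N by rewrite -PoszD subnKC.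
have hne : (nat_of_ord j) != n by apply: contra hj => /eqP e; apply/eqP/val_inj.
case: (ltngtP j n) hne => // hjn _.
  apply: Zadd_lt_r; first exact: D_le_n.
  apply: mmax; move: hjn hjN; clear; lia.
apply: Zadd_lt_l; first exact: nmax.
exact: D_le_n.
Qed.

Lemma P_sum (P : {poly A} -> Prop) (p : {poly A}) : is_Proj_point delta P -> (forall n, P (hc p`_n n)) -> P p.
Proof.
move=> [[_ P0 PD _ _] _] h; rewrite (poly_hc_sum p).
by apply: big_ind => // n _; apply: h.
Qed.

Lemma P_prod (P : {poly A} -> Prop) (I : Type) (r : seq I) (F : I -> {poly A}) :
  is_Proj_point delta P -> (forall k, inAd (F k)) -> P (\prod_(k <- r) F k) ->
  exists k, P (F k).
Proof.
move=> HP hF; elim: r => [|x r IH]; first by rewrite big_nil; case: HP => [[_ _ _ _ h1]].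
rewrite big_cons => hP; case: HP => _ [Hpr _ _].
case: (Hpr _ _ ((inAdP _).2 (hF x)) ((inAdP _).2 (inAd_prod _ hF)) hP) => h.
  by exists x.
exact: IH.
Qed.

Definition good i := ~ is_zero_fun (ds i).

Definition bnd (z : Zinf) : nat := if z is Some x then `|x|%N else 0%N.
Lemma bnd_le z : Zle z (Some (bnd z)%:Z).
Proof. case: z => [x|] //=; lia. Qed.

Lemma witness i : exists f, f != 0 /\ (forall j, j != i -> Zlt (D j f) (D i f)).
Proof.
have [f [hf h]] := Hmin i; exists f; split => // j hj; rewrite !TotE //; exact: h.
Qed.

Lemma Dl_wit i f : (forall j, j != i -> Zlt (D j f) (D i f)) -> Dl f = D i f.
Proof.
move=> h; apply: Zle_anti; last exact: D_le_Dl.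
apply/Dl_le => j; have [->|hj] := eqVneq j i; first exact: Zle_refl.
exact: Zlt_le (h j hj).
Qed.

Lemma Dexp_le j f k : Zle (D j f) (Some (-1)) -> Zle (D j (f ^+ k)) (Some (- k%:Z)).
Proof.
move=> h; elim: k => [|k IH]; first by rewrite expr0 Di1.
rewrite exprSr (Tot_mul A_idom (Hsemi j)).
have := Zadd_le IH h; case: (Zadd _ _) => [x|] //=; lia.
Qed.

Lemma Dexp0 j f k : D j f = Some 0 -> D j (f ^+ k) = Some 0.
Proof.
move=> h; elim: k => [|k IH]; first by rewrite expr0 Di1.
by rewrite exprSr (Tot_mul A_idom (Hsemi j)) IH h /= addr0.
Qed.

Lemma good_elem i : good i ->
  exists a (e : nat), [/\ (0 < e)%N, D i a = Some e%:Z & Zle (Dl a) (Some e%:Z)].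
Proof.
move=> hg; have [f [hf hw]] := witness i.
have hDl := Dl_wit hw.
have hnn := Dl_nn hf; rewrite hDl in hnn.
case Ef: (D i f) hnn => [[c|c]|] //= _.
have [c0|cpos] := posnP c; last first.
  by exists f, c; split => //; rewrite hDl Ef Zle_refl.
subst c.
have [g [hg0 hgi]] : exists g, g != 0 /\ D i g != Some 0.
  apply: NNPP => hne; apply: hg => g hg0; apply: NNPP => hne2; apply: hne.
  by exists g; split => //; rewrite TotE //; apply/eqP.
have [m hm] : exists m, forall j, (bnd (D j g) < m)%N.
  by exists (\max_(j : 'I_N) bnd (D j g))%N.+1 => j; rewrite ltnS; apply: (@leq_bigmax _ (fun j : 'I_N => bnd (D j g))).
pose h := g * f ^+ m.
have hfm : f ^+ m != 0.
  by elim: (m) => [|k IH]; rewrite ?expr0 ?oner_neq0 // exprSr mulA_neq0.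
have hh : h != 0 by apply: mulA_neq0.
have hDih : D i h = D i g.
  by rewrite /h (Tot_mul A_idom (Hsemi i)) (Dexp0 _ Ef) Zadd0r.
have hDjh : forall j, j != i -> Zle (D j h) (Some (-1)).
  move=> j hj; rewrite /h (Tot_mul A_idom (Hsemi j)).
  have h1 : Zle (D j f) (Some (-1)).
    by move: (hw j hj); rewrite Ef ZltE; case: (D j f) => [x|] //=; lia.
  have h2 := Dexp_le m h1.
  have h3 := bnd_le (D j g).
  have h4 := hm j.
  have := Zadd_le h3 h2; case: (Zadd _ _) => [x|] //=; lia.
case Eg: (D i g) hgi => [[e|e]|] hgi.
- exists h, e; rewrite hDih Eg; split => //.
    by case: e Eg hgi => // Eg; rewrite eqxx.
  apply/Dl_le => j; have [->|hj] := eqVneq j i; first by rewrite hDih Eg Zle_refl.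
  by apply: Zle_trans (hDjh j hj) _ => /=; lia.
- exfalso; have : Zlt (Dl h) (Some 0).
    apply/Dl_lt => j; have [->|hj] := eqVneq j i; first by rewrite hDih Eg.
    by apply: Zle_lt_trans (hDjh j hj) _.
  by rewrite ZltE (Dl_nn hh).
- exfalso; have : Zlt (Dl h) (Some 0).
    apply/Dl_lt => j; have [->|hj] := eqVneq j i; first by rewrite hDih Eg.
    by apply: Zle_lt_trans (hDjh j hj) _.
  by rewrite ZltE (Dl_nn hh).
Qed.

Lemma pI_X i : pI i 'X.
Proof.
split; first by apply/inAdP; exact: inAdX.
move=> n; rewrite coefX; case: eqP => [->|_]; first by rewrite Di1.
by rewrite Tot0.
Qed.

Lemma pI_hc i p n : pI i p -> pI i (hc p`_n n).
Proof.
move=> [/inAdP hp hi]; split.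
  by apply/inAdP; apply: inAd_hc; exact: hp.
by move=> m; rewrite coef_hc; case: eqP => [->//|_]; rewrite Tot0.
Qed.

Lemma pI_point i : good i -> is_Proj_point delta (pI i).
Proof.
move=> hg; split; split.
- by move=> p [].
- by split; [apply/inAdP; exact: inAd0 | move=> n; rewrite coef0 Tot0].
- move=> p q [/inAdP hp1 hp2] [/inAdP hq1 hq2]; split; first by apply/inAdP; exact: inAdD.
  move=> n; rewrite coefD; apply: Zle_lt_trans (Tot_add_le (Hdli i) _ _) _.
  by rewrite Zmax_lt hp2 hq2.
- move=> p q [/inAdP hp1 hp2] /inAdP hq; split; first by apply/inAdP; exact: inAdM.
  move=> n; rewrite coefM; apply: (Tot_sum_lt (Hdli i)) => j _.
  rewrite (Tot_mul A_idom (Hsemi i)).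
  have -> : (n%:Z) = (j%:Z + (n - j)%N%:Z) by rewrite -PoszD subnKC // -ltnS.
  by apply: Zadd_lt_r; [exact: D_le_n | exact: hp2].
- by move=> [_ h]; move: (h 0%N); rewrite coef1 /= Di1 ZltE Zle_refl.
- move=> p q /inAdP hp /inAdP hq; exact: pI_prime.
- by move=> p hp n; exact: pI_hc.
have [a [e [he hai hal]]] := good_elem hg.
exists (hc a e); split.
- by apply/inAdP; exact: inAd_hc.
- by rewrite coef_hc; case: eqP => // e0; rewrite -e0 in he.
- by move=> [_ h]; move: (h e); rewrite coef_hc eqxx hai ZltE Zle_refl.
Qed.

Lemma zero_all i p : is_zero_fun (ds i) -> inAd p -> p`_0 = 0 -> pI i p.
Proof.
move=> hz hp h0; split; first by apply/inAdP.
case=> [|n]; first by rewrite h0 Tot0.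
have [->|hn] := eqVneq p`_n.+1 0; first by rewrite Tot0.
by rewrite TotE // hz.
Qed.

Lemma Zset_good i P : Zset i P -> good i.
Proof.
move=> [[_ [_ _ [p [hp hp0 hnp]]]] hsub] hz; apply: hnp; apply: hsub.
by apply: zero_all => //; apply/inAdP.
Qed.

Lemma Xinf_cover P : X_infty delta P -> exists k, Zset k P.
Proof.
move=> [HP HX]; apply: NNPP => hne.
have hk : forall k, exists n, exists a, [/\ Zlt (D k a) (Some n%:Z),
    Zle (Dl a) (Some n%:Z) & ~ P (hc a n)].
  move=> k; apply: NNPP => hne2; apply: hne; exists k; split; first exact: HP.
  move=> p hp; apply: (P_sum HP) => n; apply: NNPP => hn; apply: hne2.
  case: hp => /inAdP hp1 hp2; exists n, p`_n; split => //.
have [nf hnf] : exists nf : 'I_N -> nat, forall k, exists a, [/\ Zlt (D k a) (Some (nf k)%:Z),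
    Zle (Dl a) (Some (nf k)%:Z) & ~ P (hc a (nf k))].
  exact: (functional_choice (fun k (n : nat) => exists a, [/\ Zlt (D k a) (Some n%:Z),
    Zle (Dl a) (Some n%:Z) & ~ P (hc a n)]) hk).
have [af haf] := functional_choice _ hnf.
pose a := \prod_(k < N) af k.
pose n := (\sum_(k < N) nf k)%N.
have hprod : \prod_(k < N) hc (af k) (nf k) = hc a n.
  rewrite /hc /a /n big_split /= rmorph_prod; congr (_ * _).
  by rewrite prodrXr.
have hPa : P (hc a n).
  have [->|ha0] := eqVneq a 0.
    by rewrite /hc mul0r; case: HP => [[]].
  have hlt : Zlt (Dl a) (Some n%:Z).
    apply/Dl_lt => j; rewrite /n (bigD1 j) //= /a (bigD1 j) //=.
    rewrite (Tot_mul A_idom (Hsemi j)) PoszD.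
    apply: Zadd_lt_l; first by case: (haf j).
    apply: (big_ind2 (fun x (y : nat) => Zle (D j x) (Some y%:Z))).
    - by rewrite Di1.
    - move=> x1 y1 x2 y2 h1 h2; rewrite (Tot_mul A_idom (Hsemi j)) PoszD.
      exact: Zadd_le h1 h2.
    - move=> k _; case: (haf k) => _ h _; exact: Zle_trans (D_le_Dl _ _) h.
  have hn1 : (0 < n)%N.
    move: (Zle_lt_trans (Dl_nn ha0) hlt); rewrite ZltE /=; lia.
  have hle : Zle (Dl a) (Some (n.-1)%:Z).
    move: hlt; rewrite ZltE; case: (Dl a) => [x|] //=; lia.
  have -> : hc a n = hc a n.-1 * 'X.
    by rewrite /hc -mulrA -exprSr prednK.
  case: HP => [[_ _ _ HM _] _]; apply: HM => //.
  by apply/inAdP; exact: inAd_hc.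
rewrite -hprod in hPa.
have hin : forall k, inAd (hc (af k) (nf k)).
  by move=> k; apply: inAd_hc; case: (haf k).
have [k hk'] := P_prod HP hin hPa.
by case: (haf k) => _ _; apply.
Qed.

Lemma pI_incl k i : (forall p, pI k p -> pI i p) -> k = i.
Proof.
move=> hsub; apply: NNPP => hki.
have [f [hf hw]] := witness i.
have hDl := Dl_wit hw.
have hnn := Dl_nn hf; rewrite hDl in hnn.
case Ef: (D i f) hnn => [[e|e]|] //= _.
have hin : pI k (hc f e).
  split; first by apply/inAdP; apply: inAd_hc; rewrite hDl Ef Zle_refl.
  move=> m; rewrite coef_hc; case: eqP => [->|_]; last by rewrite Tot0.
  by rewrite -Ef; apply: hw; apply/eqP.
have [_ /(_ e)] := hsub _ hin.
by rewrite coef_hc eqxx Ef ZltE Zle_refl.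
Qed.

Lemma closed_ext (C C' : ({poly A} -> Prop) -> Prop) :
  Proj_closed delta C -> (forall P, C P <-> C' P) -> Proj_closed delta C'.
Proof.
move=> [I [hI hC]] he; exists I; split => // P; rewrite -he; exact: hC.
Qed.

Lemma closed_Zset i : Proj_closed delta (Zset i).
Proof. by exists (pI i); split => [p []|P]. Qed.

Lemma closed_empty : Proj_closed delta (fun _ => False).
Proof.
exists (fun r => r = 1); split; first by move=> p ->; apply/inAdP; exact: inAd1.
move=> P; split => // [[[[_ _ _ _ h1] _] h]]; apply: h1; exact: h.
Qed.

Lemma closed_union (C1 C2 : ({poly A} -> Prop) -> Prop) :
  Proj_closed delta C1 -> Proj_closed delta C2 ->
  Proj_closed delta (fun P => C1 P \/ C2 P).
Proof.
move=> [I1 [hI1 hC1]] [I2 [hI2 hC2]].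
exists (fun r => exists p q, [/\ I1 p, I2 q & r = p * q]); split.
  move=> r [p [q [hp hq ->]]]; apply/inAdP; apply: inAdM; apply/inAdP.
    exact: hI1.
  exact: hI2.
move=> P; split.
  case => [/hC1 [HP h]|/hC2 [HP h]]; split => // r [p [q [hp hq ->]]];
    case: (HP) => [[_ _ _ HM _] _].
    by rewrite mulrC; apply: HM; [apply: h | apply: hI2].
  by apply: HM; [apply: h | apply: hI1].
move=> [HP h].
case: (classic (forall p, I1 p -> P p)) => h1; first by left; apply/hC1.
case: (classic (forall q, I2 q -> P q)) => h2; first by right; apply/hC2.
exfalso.
have [p hp] := not_all_ex_not _ _ h1; have [hp1 hp2] := imply_to_and _ _ hp.
have [q hq] := not_all_ex_not _ _ h2; have [hq1 hq2] := imply_to_and _ _ hq.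
case: (HP) => _ [Hpr _ _].
have := h (p * q) (ex_intro _ p (ex_intro _ q (And3 hp1 hq1 erefl))).
by move/(Hpr _ _ (hI1 _ hp1) (hI2 _ hq1)) => [].
Qed.

Definition U (s : seq 'I_N) (P : {poly A} -> Prop) := exists2 k, k \in s & Zset k P.

Lemma closed_U s : Proj_closed delta (U s).
Proof.
elim: s => [|k s IH].
  by apply: (closed_ext closed_empty) => P; split => // [[k]].
apply: (closed_ext (closed_union (closed_Zset k) IH)) => P; split.
  case=> [h|[j hj h]]; first by exists k; rewrite ?mem_head.
  by exists j; rewrite // in_cons hj orbT.
move=> [j]; rewrite in_cons => /orP [/eqP ->|hj] h; first by left.
by right; exists j.
Qed.

Lemma irr_cover (Z : ({poly A} -> Prop) -> Prop) : irreducible_in_Xinf delta Z ->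
  exists k, forall P, Z P -> Zset k P.
Proof.
move=> [hsub [P0 hP0] hirr].
suff : forall s, (forall P, Z P -> U s P) -> exists k, forall P, Z P -> Zset k P.
  apply=> P /hsub /Xinf_cover [k hk]; exists k => //; exact: mem_enum.
elim=> [|k s IH] hcov.
  by have [j] := hcov _ hP0.
have : forall P, Z P -> Zset k P \/ U s P.
  move=> P /hcov [j]; rewrite in_cons => /orP [/eqP ->|hj] h; first by left.
  by right; exists j.
move/(hirr _ _ (closed_Zset k) (closed_U s)) => [h|h]; first by exists k.
exact: IH.
Qed.

Lemma Zset_irr i : good i -> irreducible_in_Xinf delta (Zset i).
Proof.
move=> hg; split.
- move=> P [HP h]; split => //; apply: h; exact: pI_X.
- by exists (pI i); split => //; exact: pI_point.
move=> C1 C2 [I1 [hI1 hC1]] [I2 [hI2 hC2]] hcov.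
have hpi : Zset i (pI i) by split => //; exact: pI_point.
case: (hcov _ hpi) => [/hC1 [_ h]|/hC2 [_ h]]; [left|right] => P [HP hP].
  by apply/hC1; split => // p /h /hP.
by apply/hC2; split => // p /h /hP.
Qed.

Lemma Zset_comp i : good i -> irreducible_component_Xinf delta (Zset i).
Proof.
move=> hg; split; first exact: Zset_irr.
move=> Z' hirr hsub; have [k hk] := irr_cover hirr.
have hpi : Zset i (pI i) by split => //; exact: pI_point.
have [_ hki] := hk _ (hsub _ hpi).
have e := pI_incl hki; subst k; exact: hk.
Qed.

Lemma comp_classify Z : irreducible_component_Xinf delta Z ->
  exists k, good k /\ forall P, Z P <-> Zset k P.
Proof.
move=> [hirr hmax]; have [k hk] := irr_cover hirr.
have hgk : good k.
  case: hirr => _ [P hP] _; exact: (Zset_good (hk _ hP)).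
exists k; split => // P; split; first exact: hk.
exact: (hmax _ (Zset_irr hgk) hk).
Qed.

Lemma Zset_inj i j : good i -> (forall P, Zset i P <-> Zset j P) -> i = j.
Proof.
move=> hg he.
have hpi : Zset i (pI i) by split => //; exact: pI_point.
have [_ h] := (he _).1 hpi; exact: esym (pI_incl h).
Qed.

Lemma count_gen M (g : 'I_M -> 'I_N) : injective g -> (forall m, good (g m)) ->
  (forall k, good k -> exists m, g m = k) -> Xinf_has_n_components delta M.
Proof.
move=> ginj hg hsurj; exists (fun m => Zset (g m)); split.
- by move=> m; apply: Zset_comp.
- by move=> a b he; apply: ginj; apply: Zset_inj.
move=> Z /comp_classify [k [hk he]]; have [m hm] := hsurj k hk.
by exists m; rewrite hm.
Qed.

Lemma count1 : (forall i, good i) -> Xinf_has_n_components delta N.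
Proof. by move=> h; apply: (count_gen (g := id)) => // k _; exists k. Qed.

Lemma zero_unique i0 j : is_zero_fun (ds i0) -> j != i0 -> good j.
Proof.
move=> hz hj hzj; have [f [hf hw]] := witness i0.
have := hw j hj; rewrite !TotE // hz // hzj //.
Qed.

End Main.

End Aux.
Import Aux.

Theorem corollary4p4 (K : closedFieldType) (A : comAlgType K)
  (A_idom : forall f g : A, f * g = 0 -> (f == 0) || (g == 0))
  (delta : A -> Zinf) (N : nat) (ds : 'I_N -> A -> Zinf)
  (Hdl : degree_like delta)
  (Hnn : nonneg_fun delta)
  (Hpres : subdegree_presentation delta ds)
  (Hmin : minimal_presentation ds) :
  ((forall i, ~ is_zero_fun (ds i)) -> Xinf_has_n_components delta N) /\
  ((exists i, is_zero_fun (ds i)) -> Xinf_has_n_components delta N.-1).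
Proof.
split.
  by move=> h; apply: (count1 A_idom Hdl Hnn Hpres Hmin) => i; exact: h.
move=> [i0 hz].
move: ds Hpres Hmin i0 hz; case: N => [|n] ds Hpres Hmin i0 hz; first by case: i0 hz.
apply: (count_gen A_idom Hdl Hnn Hpres Hmin (g := lift i0)).
- exact: lift_inj.
- move=> m; apply: (zero_unique Hmin hz); rewrite eq_sym; exact: neq_lift.
- move=> k hk; case: (unliftP i0 k) => [j ->|e]; first by exists j.
  by exfalso; apply: hk; rewrite e.
Qed.
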